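(* Let $R$ be a ring and $S\in\max\mathrm{Den}_l(R)$. Then the ring $S^{-1}R$ is a division ring if and only if $R=S\cup\mathrm{ass}(S)$.
   Context: All rings are associative with $1$. A multiplicative subset $S$ of $R$ ($1\in S$, $0\notin S$, closed under multiplication) is a left Ore set if $Sr\cap Rs\neq\emptyset$ for all $r\in R$, $s\in S$; for it, $\mathrm{ass}(S):=\{r\in R: sr=0\text{ for some } s\in S\}$. A left Ore set $S$ is a left denominator set if $rs=0$ ($r\in R$, $s\in S$) implies $tr=0$ for some $t\in S$; $S^{-1}R$ is the left localization. $\max\mathrm{Den}_l(R)$ is the set of maximal elements, under inclusion, of the set of left denominator sets of $R$. *)

(* Defs.v *)
From HB Require Import structures.
From mathcomp Require Import all_boot all_algebra.
Set Implicit Arguments. Unset Strict Implicit. Unset Printing Implicit Defensive.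
Import GRing.Theory.
Local Open Scope ring_scope.

Definition mult_subset (R : pzRingType) (S : R -> Prop) : Prop :=
  S 1 /\ ~ S 0 /\ (forall a b, S a -> S b -> S (a * b)).

Definition left_ore (R : pzRingType) (S : R -> Prop) : Prop :=
  mult_subset S /\
  (forall (r s : R), S s -> exists (s' r' : R), S s' /\ s' * r = r' * s).

Definition ass (R : pzRingType) (S : R -> Prop) (r : R) : Prop :=
  exists s, S s /\ s * r = 0.

Definition left_den (R : pzRingType) (S : R -> Prop) : Prop :=
  left_ore S /\
  (forall (r s : R), S s -> r * s = 0 -> exists t, S t /\ t * r = 0).

Definition max_left_den (R : pzRingType) (S : R -> Prop) : Prop :=
  left_den S /\
  (forall T : R -> Prop, left_den T -> (forall x, S x -> T x) ->
     forall x, T x -> S x).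

(* f : R -> Q is a left localization (left ring of fractions) of R at S,
   i.e. (Q, f) is S^{-1}R up to isomorphism:
   f(S) consists of units, every element of Q is f(s)^{-1} f(r), and
   ker f = ass(S). *)
Definition is_left_localization (R Q : pzRingType) (S : R -> Prop)
    (f : {rmorphism R -> Q}) : Prop :=
  (forall s, S s -> exists u : Q, u * f s = 1 /\ f s * u = 1) /\
  (forall q : Q, exists s r, S s /\ f s * q = f r) /\
  (forall r, f r = 0 <-> ass S r).

Definition division_ring (Q : pzRingType) : Prop :=
  (1 : Q) <> 0 /\ (forall x : Q, x <> 0 -> exists y, y * x = 1 /\ x * y = 1).

(* Main.v *)
Require Import Defs.
From mathcomp Require Import all_boot all_algebra.
Local Open Scope ring_scope.
Import GRing.Theory.

Theorem lemma3p4 (R : pzRingType) (S : R -> Prop) (HS : max_left_den S)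
    (Q : pzRingType) (f : {rmorphism R -> Q})
    (Hloc : is_left_localization S f) :
  division_ring Q <-> (forall r : R, S r \/ ass S r).
Proof.
have [[[[[S1 [S0 SM]] Sore] Sden] Smax]] := (HS, HS).
move: Hloc => [Hu [Hq Hker]].
split.
- move=> [Q10 Qinv] r.
  case: (@eqP _ (f r) 0) => [/Hker|fr0]; first by right.
  left.
  pose T := fun x : R => exists u : Q, u * f x = 1 /\ f x * u = 1.
  apply: (Smax T); last first.
  + by have [y [h1 h2]] := Qinv _ fr0; exists y.
  + by move=> x /Hu.
  split; [split; [split; [|split]|] |].
  + by exists 1; rewrite rmorph1 mulr1.
  + move=> [u [h _]]; apply: Q10; by rewrite -h rmorph0 mulr0.
  + move=> a0 b0 [u [hu1 hu2]] [v [hv1 hv2]]; exists (v * u); rewrite rmorphM; split.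
      by rewrite mulrA -(mulrA v) hu1 mulr1.
    by rewrite mulrA -(mulrA (f a0)) hv2 mulr1.
  + move=> x t [w [hw1 hw2]].
    have [s [a [Ss Hs]]] := Hq (f x * w).
    have : f (s * x - a * t) = 0.
      by rewrite rmorphB !rmorphM -Hs -!mulrA hw1 mulr1 subrr.
    move/Hker=> [s2 [Ss2 H2]].
    exists (s2 * s), (s2 * a); split; first by apply: Hu; apply: SM.
    by apply/eqP; rewrite -!mulrA -subr_eq0 -mulrBr H2.
  + move=> x t [w [hw1 hw2]] hxt.
    have : f x = 0.
      by rewrite -(mulr1 (f x)) -hw2 mulrA -rmorphM hxt rmorph0 mul0r.
    move/Hker=> [s [Ss H]]; exists s; split => //; exact: Hu.
- move=> Hall; split.
  + move=> h; apply: S0.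
    have : f 1 = 0 by rewrite rmorph1.
    move/Hker=> [s [Ss H]]; by rewrite mulr1 in H; rewrite -H.
  + move=> q q0.
    have [s [r [Ss Hs]]] := Hq q.
    have [u [hu1 hu2]] := Hu _ Ss.
    have eq : q = u * f r by rewrite -Hs mulrA hu1 mul1r.
    case: (Hall r) => [Sr|/Hker fr0]; last first.
      by exfalso; apply: q0; rewrite eq fr0 mulr0.
    have [v [hv1 hv2]] := Hu _ Sr.
    exists (v * f s); rewrite eq; split.
      by rewrite mulrA -(mulrA v) hu2 mulr1.
    by rewrite -mulrA (mulrA (f r)) hv2 mul1r.
Qed.
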